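(* For any positive integer $n$ and any pair of non-negative integers $s,t$ with $s \geq t$, \[ \sum_{j=0}^{n} \frac{1}{\binom{n+s}{j+t}} \binom{n}{j} \;=\; \frac{s+1+n}{(s+1)\binom{s}{t}} . \] *)

(* Defs.v *)
From mathcomp Require Import all_boot all_order all_algebra.

(* Main.v *)
Require Import Defs.
From mathcomp Require Import all_boot all_order all_algebra.
From mathcomp Require Import ring lra.
Import GRing.Theory Num.Theory.
Local Open Scope ring_scope.

Lemma alg s t : (t <= s)%N -> forall m : nat,
  (m%:R : rat) / ((s.+2)%:R * ('C(s.+1, t))%:R)
  + m%:R / ((s.+2)%:R * ('C(s.+1, t.+1))%:R)
  = m%:R / ((s.+1)%:R * ('C(s, t))%:R).
Proof.
move=> hts m.
have h1 := mul_bin_down s.+1 t.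
have h2 := mul_bin_diag s.+1 t.
rewrite /= in h1 h2.
have a0 : ('C(s, t)%:R : rat) != 0 by rewrite pnatr_eq0 -lt0n bin_gt0.
have d0 : ((s.+1 - t)%:R : rat) != 0 by rewrite pnatr_eq0 -lt0n subn_gt0 ltnS.
have eb : ('C(s.+1, t)%:R : rat) = (s.+1)%:R * 'C(s, t)%:R / (s.+1 - t)%:R.
  by apply/(mulIf d0); rewrite mulfVK // -!natrM h1 mulnC.
have ec : ('C(s.+1, t.+1)%:R : rat) = (s.+1)%:R * 'C(s, t)%:R / (t.+1)%:R.
  have t0 : ((t.+1)%:R : rat) != 0 by rewrite pnatr_eq0.
  by apply/(mulIf t0); rewrite mulfVK // -!natrM h2 mulnC.
have ed : ((s.+1 - t)%:R : rat) = (s.+1)%:R - t%:R by rewrite natrB // ltnW.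
rewrite eb ec ed.
rewrite ed in d0.
rewrite !mulrSr in d0 *.
have s0 : (s%:R : rat) + 1 != 0 by rewrite -mulrSr pnatr_eq0.
have s1 : (s%:R : rat) + 1 + 1 != 0 by rewrite -!mulrSr pnatr_eq0.
have t1 : (t%:R : rat) + 1 != 0 by rewrite -!mulrSr pnatr_eq0.
field.
by rewrite s1 s0 a0 d0 t1.
Qed.

Lemma key n : forall s t, (t <= s)%N ->
  \sum_(j < n.+1) ('C(n + s, j + t)%:R : rat)^-1 * ('C(n, j))%:R
  = ((s + 1 + n)%:R : rat) / ((s + 1)%:R * ('C(s, t))%:R).
Proof.
elim: n => [|n IH] s t hts.
  rewrite big_ord1 /= bin0 mulr1 add0n addn0 invfM mulrA mulfV ?mul1r //.
  by rewrite pnatr_eq0 addn1.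
rewrite big_ord_recl /= bin0 mulr1.
under eq_bigr => i _ do rewrite /bump /= add1n binS natrD mulrDr.
rewrite big_split /=.
have E1 : \sum_(i < n.+1) ('C(n.+1 + s, i.+1 + t)%:R : rat)^-1 * 'C(n, i)%:R
   = \sum_(i < n.+1) ('C(n + s.+1, i + t.+1)%:R : rat)^-1 * 'C(n, i)%:R.
  by apply: eq_bigr => i _; rewrite addSn addnS addSn addnS.
rewrite E1 IH // addrA.
have E2 : ('C(n.+1 + s, t)%:R : rat)^-1 +
   \sum_(i < n.+1) ('C(n.+1 + s, i.+1 + t)%:R : rat)^-1 * 'C(n, i.+1)%:R
   = \sum_(i < n.+2) ('C(n + s.+1, i + t)%:R : rat)^-1 * 'C(n, i)%:R.
  rewrite [RHS]big_ord_recl /= bin0 mulr1 add0n addnS addSn.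
  by congr (_ + _); apply: eq_bigr => i _.
rewrite add0n E2 big_ord_recr /= (@bin_small n n.+1) // mulr0n mulr0 addr0 IH //.
have -> : (s.+1 + 1 + n = s + 1 + n.+1)%N by rewrite !addn1 addnS.
rewrite !addn1.
  exact: (@alg s t hts).
exact: leqW.
Qed.

Theorem lemma1 (n s t : nat) (hn : (0 < n)%N) (hst : (t <= s)%N) :
  \sum_(0 <= j < n.+1) ('C(n + s, j + t)%:R : rat)^-1 * ('C(n, j))%:R
  = ((s + 1 + n)%:R : rat) / ((s + 1)%:R * ('C(s, t))%:R).
Proof.
by rewrite big_mkord key.
Qed.
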